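(* Let $(X,f)$ be a dynamical system. The following are equivalent: (1) $(X,f)$ is multi-transitive; (2) $(X,f)$ is $\mathcal{F}[\infty]$-transitive; (3) $(X,f)$ is $\nabla(\mathcal{F}[\infty])$-point transitive.
   Context: A dynamical system is a pair $(X,f)$ with $X$ a compact metric space and $f:X\to X$ continuous. $\mathbb{N}=\{1,2,\dots\}$, $\mathbb{Z}_+=\{0,1,2,\dots\}$. $N(U,V)=\{n\in\mathbb{N}: U\cap f^{-n}(V)\neq\emptyset\}$, $N(x,U)=\{n\in\mathbb{N}: f^n(x)\in U\}$. $(X,f)$ is transitive if $N(U,V)\neq\emptyset$ for all non-empty open $U,V$. For a family $\mathcal{F}$ of subsets of $\mathbb{N}$: $(X,f)$ is $\mathcal{F}$-transitive if $N(U,V)\in\mathcal{F}$ for all non-empty open $U,V$; $x$ is an $\mathcal{F}$-transitive point if $N(x,U)\in\mathcal{F}$ for every non-empty open $U$, and $(X,f)$ is $\mathcal{F}$-point transitive if such a point exists. For $F\subset\mathbb{N}$, $F-F=\{a-b:a,b\in F,\ a>b\}$ and $\nabla(\mathcal{F})=\{F\subset\mathbb{N}: F-F\in\mathcal{F}\}$. $(X,f)$ is multi-transitive if for every $n\in\mathbb{N}$ the system $(X^n,f\times f^2\times\dots\times f^n)$ is transitive. For $\mathbf{a}\in\mathbb{N}^r$, $\mathcal{F}[\mathbf{a}]$ is the collection of all $F\subset\mathbb{N}$ such that for every $(n_1,\dots,n_r)\in\mathbb{Z}_+^r$ there is $k\in\mathbb{N}$ with $ka_i+n_i\in F$ for all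 $i$; and $\mathcal{F}[\infty]=\bigcap_{i=1}^\infty\mathcal{F}[(1,2,\dots,i)]$. *)

(* Defs.v *)
From Stdlib Require Import Reals List.
Open Scope R_scope.

Definition is_metric {X : Type} (d : X -> X -> R) : Prop :=
  (forall x y, 0 <= d x y) /\
  (forall x y, d x y = 0 <-> x = y) /\
  (forall x y, d x y = d y x) /\
  (forall x y z, d x z <= d x y + d y z).

Definition is_open {X : Type} (d : X -> X -> R) (U : X -> Prop) : Prop :=
  forall x, U x -> exists eps, 0 < eps /\ forall y, d x y < eps -> U y.

Definition compact_metric {X : Type} (d : X -> X -> R) : Prop :=
  forall (I : Type) (U : I -> X -> Prop),
    (forall i, is_open d (U i)) ->
    (forall x, exists i, U i x) ->
    exists l : list I, forall x, exists i, In i l /\ U i x.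

Definition continuous {X : Type} (d : X -> X -> R) (f : X -> X) : Prop :=
  forall x eps, 0 < eps ->
    exists delta, 0 < delta /\ forall y, d x y < delta -> d (f x) (f y) < eps.

(** Subsets of N = {1,2,...} are predicates on nat (only elements >= 1 used);
    families of subsets are predicates on such predicates. *)
Definition natset := nat -> Prop.
Definition family := natset -> Prop.

Definition transitive_wrt {Y : Type} (op : (Y -> Prop) -> Prop) (g : Y -> Y) : Prop :=
  forall U V, op U -> op V -> (exists y, U y) -> (exists y, V y) ->
    exists n, (1 <= n)%nat /\ exists y, U y /\ V (Nat.iter n g y).

Definition Nhit {X : Type} (f : X -> X) (U V : X -> Prop) : natset :=
  fun n => (1 <= n)%nat /\ exists x, U x /\ V (Nat.iter n f x).

Definition Nvisit {X : Type} (f : X -> X) (x : X) (U : X -> Prop) : natset :=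
  fun n => (1 <= n)%nat /\ U (Nat.iter n f x).

Definition transitive {X : Type} (d : X -> X -> R) (f : X -> X) : Prop :=
  transitive_wrt (is_open d) f.

Definition F_transitive {X : Type} (d : X -> X -> R) (f : X -> X) (Fm : family) : Prop :=
  forall U V, is_open d U -> is_open d V -> (exists y, U y) -> (exists y, V y) ->
    Fm (Nhit f U V).

Definition F_transitive_point {X : Type} (d : X -> X -> R) (f : X -> X)
  (Fm : family) (x : X) : Prop :=
  forall U, is_open d U -> (exists y, U y) -> Fm (Nvisit f x U).

Definition F_point_transitive {X : Type} (d : X -> X -> R) (f : X -> X) (Fm : family) : Prop :=
  exists x, F_transitive_point d f Fm x.

Definition diffset (F : natset) : natset :=
  fun m => exists a b, F a /\ F b /\ (b < a)%nat /\ m = (a - b)%nat.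

Definition nabla (Fm : family) : family := fun F => Fm (diffset F).

(** F[a] for a = (a_0,...,a_{r-1}) given as a function on indices < r:
    for every (n_0,...,n_{r-1}) in Z_+^r there is k >= 1 with k a_i + n_i in F for all i < r. *)
Definition Fa (r : nat) (a : nat -> nat) : family :=
  fun F => forall n : nat -> nat,
    exists k, (1 <= k)%nat /\ forall i, (i < r)%nat -> F (k * a i + n i)%nat.

(** F[infinity] = intersection over i >= 1 of F[(1,2,...,i)] *)
Definition Finf : family :=
  fun F => forall i, (1 <= i)%nat -> Fa i (fun j => S j) F.

(** Product X^n: points are x : nat -> X, only coordinates 0..n-1 relevant.
    Open sets for the product (sup-metric) topology. *)
Definition is_open_prod {X : Type} (d : X -> X -> R) (n : nat) (W : (nat -> X) -> Prop) : Prop :=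
  forall x, W x -> exists eps, 0 < eps /\
    forall y, (forall i, (i < n)%nat -> d (x i) (y i) < eps) -> W y.

(** f x f^2 x ... x f^n : coordinate i (0-based) is moved by f^(i+1). *)
Definition prod_map {X : Type} (f : X -> X) : (nat -> X) -> (nat -> X) :=
  fun x i => Nat.iter (S i) f (x i).

Definition multi_transitive {X : Type} (d : X -> X -> R) (f : X -> X) : Prop :=
  forall n, (1 <= n)%nat -> transitive_wrt (is_open_prod d n) (prod_map f).

(* Main.v *)
Require Import Defs.
From Stdlib Require Import Reals List Lra Lia ClassicalEpsilon Classical.
Open Scope R_scope.

Lemma choice_fun {A B : Type} (P : A -> B -> Prop) :
  (forall a, exists b, P a b) -> exists g, forall a, P a (g a).
Proof.
  intros H. exists (fun a => proj1_sig (constructive_indefinite_description _ (H a))).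
  intros a. exact (proj2_sig (constructive_indefinite_description _ (H a))).
Qed.

Lemma iter_add {A} (g : A -> A) a b x : Nat.iter (a + b) g x = Nat.iter a g (Nat.iter b g x).
Proof. apply Nat.iter_add. Qed.

Lemma iter_prod {X} (f : X -> X) k y j :
  Nat.iter k (prod_map f) y j = Nat.iter (k * S j) f (y j).
Proof.
  induction k. reflexivity.
  change (Nat.iter (S k) (prod_map f) y j) with (Nat.iter (S j) f (Nat.iter k (prod_map f) y j)).
  rewrite IHk, <- iter_add. f_equal; lia.
Qed.


Lemma m_refl {X} (d : X -> X -> R) (Hd : is_metric d) x : d x x = 0.
Proof. destruct Hd as [_ [H _]]. apply H. reflexivity. Qed.
Lemma m_sym {X} (d : X -> X -> R) (Hd : is_metric d) x y : d x y = d y x.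
Proof. destruct Hd as [_ [_ [H _]]]. apply H. Qed.
Lemma m_tri {X} (d : X -> X -> R) (Hd : is_metric d) x y z : d x z <= d x y + d y z.
Proof. destruct Hd as [_ [_ [_ H]]]. apply H. Qed.

Lemma ball_open {X} (d : X -> X -> R) (Hd : is_metric d) c r : is_open d (fun y => d c y < r).
Proof.
  intros y Hy. exists (r - d c y). split. lra. intros z Hz.
  pose proof (m_tri d Hd c y z). lra.
Qed.

Lemma true_open {X} (d : X -> X -> R) : is_open d (fun _ => True).
Proof. intros x _. exists 1. split; [lra|auto]. Qed.

Lemma cont_iter {X} (d : X -> X -> R) f (Hf : continuous d f) n : continuous d (Nat.iter n f).
Proof.
  induction n; simpl.
  - intros x eps He. exists eps; split; auto.
  - intros x eps He. destruct (Hf (Nat.iter n f x) eps He) as [del [Hdel H1]].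
    destruct (IHn x del Hdel) as [del2 [H2 H3]]. exists del2. split; auto.
    intros y Hy. apply H1. apply H3. exact Hy.
Qed.

Lemma preim_open {X} (d : X -> X -> R) g U (Hg : continuous d g) (HU : is_open d U) :
  is_open d (fun y => U (g y)).
Proof.
  intros y Hy. destruct (HU (g y) Hy) as [e [He H]].
  destruct (Hg y e He) as [del [Hdl H2]]. exists del. split; auto.
Qed.

Lemma inter_open {X} (d : X -> X -> R) U V (HU : is_open d U) (HV : is_open d V) :
  is_open d (fun y => U y /\ V y).
Proof.
  intros y [Hy1 Hy2]. destruct (HU y Hy1) as [e1 [He1 H1]].
  destruct (HV y Hy2) as [e2 [He2 H2]]. exists (Rmin e1 e2). split.
  apply Rmin_pos; auto.
  intros z Hz. split; [apply H1 | apply H2]; pose proof (Rmin_l e1 e2); pose proof (Rmin_r e1 e2); lra.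
Qed.

Lemma box_open {X} (d : X -> X -> R) n (O : nat -> X -> Prop) :
  (forall j, (j < n)%nat -> is_open d (O j)) ->
  is_open_prod d n (fun y => forall j, (j < n)%nat -> O j (y j)).
Proof.
  intros HO x Hx. revert HO Hx. induction n; intros HO Hx.
  - exists 1. split. lra. intros; lia.
  - destruct IHn as [e1 [He1 H1]]. intros; apply HO; lia. intros; apply Hx; lia.
    destruct (HO n (Nat.lt_succ_diag_r n) (x n) (Hx n (Nat.lt_succ_diag_r n))) as [e2 [He2 H2]].
    exists (Rmin e1 e2). split. apply Rmin_pos; auto.
    intros y Hy j Hj. pose proof (Rmin_l e1 e2); pose proof (Rmin_r e1 e2).
    destruct (Nat.eq_dec j n).
    + subst. apply H2. specialize (Hy n Hj). lra.
    + apply H1. intros i Hi. specialize (Hy i ltac:(lia)). lra. lia.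
Qed.

Fixpoint bmax (b : nat -> nat) n := match n with 0%nat => 0%nat | S n => Nat.max (b n) (bmax b n) end.
Lemma bmax_ge b n j : (j < n)%nat -> (b j <= bmax b n)%nat.
Proof.
  induction n; intros; simpl. lia.
  destruct (Nat.eq_dec j n). subst; lia. specialize (IHn ltac:(lia)); lia.
Qed.

Lemma pull {X} (d : X -> X -> R) f (Hd : is_metric d) (Hf : continuous d f)
  (Ht : transitive d f) (Hne : inhabited X) n (O : nat -> X -> Prop) :
  (forall j, (j < n)%nat -> is_open d (O j) /\ exists y, O j y) ->
  exists O' (a : nat -> nat), is_open d O' /\ (exists y, O' y) /\
    forall z, O' z -> forall j, (j < n)%nat -> O j (Nat.iter (a j) f z).
Proof.
  induction n; intros H.
  - exists (fun _ => True), (fun _ => 0%nat). split. apply true_open.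
    split. destruct Hne as [x]; exists x; auto. intros; lia.
  - destruct IHn as [O' [a [HO' [[y0 Hy0] Ha]]]]. intros j Hj; apply H; lia.
    destruct (H n (Nat.lt_succ_diag_r n)) as [HOn [yn Hyn]].
    destruct (Ht O' (O n) HO' HOn (ex_intro _ y0 Hy0) (ex_intro _ yn Hyn)) as [m [Hm [y [Hy1 Hy2]]]].
    exists (fun z => O' z /\ O n (Nat.iter m f z)), (fun j => if Nat.eqb j n then m else a j).
    split. apply inter_open; auto. apply preim_open; auto. apply cont_iter; auto.
    split. exists y; auto.
    intros z [Hz1 Hz2] j Hj. destruct (Nat.eqb_spec j n). subst; auto. apply Ha; auto; lia.
Qed.

Lemma Finf_trans {X} (d : X -> X -> R) f : F_transitive d f Finf -> transitive d f.
Proof.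
  intros HF U V HU HV HUn HVn.
  destruct (HF U V HU HV HUn HVn 1%nat (le_n 1) (fun _ => 0%nat)) as [k [Hk Hk2]].
  destruct (Hk2 0%nat ltac:(lia)) as [H1 [x [Hx1 Hx2]]].
  exists (k * 1 + 0)%nat. split; auto. exists x; auto.
Qed.

Lemma two_one {X} (d : X -> X -> R) f (Hd : is_metric d) (Hf : continuous d f) (Hne : inhabited X) :
  F_transitive d f Finf -> multi_transitive d f.
Proof.
  intros HF. pose proof (Finf_trans d f HF) as Ht.
  intros n Hn W W' HW HW' [x Hx] [y Hy].
  destruct (HW x Hx) as [e1 [He1 HB1]]. destruct (HW' y Hy) as [e2 [He2 HB2]].
  destruct (pull d f Hd Hf Ht Hne n (fun j => fun z => d (x j) z < e1)) as [U' [a [HU' [HU'n Ha]]]].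
  { intros j _. split. apply ball_open; auto. exists (x j). rewrite (m_refl d Hd); lra. }
  destruct (pull d f Hd Hf Ht Hne n (fun j => fun z => d (y j) z < e2)) as [V' [b [HV' [HV'n Hb]]]].
  { intros j _. split. apply ball_open; auto. exists (y j). rewrite (m_refl d Hd); lra. }
  set (c := bmax b n).
  destruct (HF U' V' HU' HV' HU'n HV'n n Hn (fun j => a j + c * S j - b j)%nat) as [k [Hk Hk2]].
  assert (Hz: forall j, exists z, (j < n)%nat -> U' z /\ V' (Nat.iter (k * S j + (a j + c * S j - b j)) f z)).
  { intros j. destruct (Compare_dec.lt_dec j n) as [Hj|Hj].
    - destruct (Hk2 j Hj) as [_ [z [Hz1 Hz2]]]. exists z; auto.
    - destruct Hne as [z0]; exists z0; intros; lia. }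
  destruct (choice_fun _ Hz) as [z Hzz].
  exists (k + c)%nat. split. lia.
  exists (fun j => Nat.iter (a j) f (z j)). split.
  - apply HB1. intros j Hj. apply (Ha (z j) (proj1 (Hzz j Hj)) j Hj).
  - apply HB2. intros j Hj. rewrite iter_prod. cbv beta. rewrite <- iter_add.
    assert (E: ((k + c) * S j + a j = b j + (k * S j + (a j + c * S j - b j)))%nat).
    { pose proof (bmax_ge b n j Hj). fold c in H. nia. }
    rewrite E, iter_add. apply (Hb _ (proj2 (Hzz j Hj)) j Hj).
Qed.

Lemma multi_trans {X} (d : X -> X -> R) f : multi_transitive d f -> transitive d f.
Proof.
  intros HM U V HU HV [u Hu] [v Hv].
  destruct (HM 1%nat (le_n 1) (fun y => forall j, (j < 1)%nat -> U (y j))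
     (fun y => forall j, (j < 1)%nat -> V (y j))) as [k [Hk [y [Hy1 Hy2]]]].
  apply (box_open d 1 (fun _ => U)); auto.
  apply (box_open d 1 (fun _ => V)); auto.
  exists (fun _ => u); auto. exists (fun _ => v); auto.
  exists k. split; auto. exists (y 0%nat). split. apply Hy1; lia.
  specialize (Hy2 0%nat ltac:(lia)). rewrite iter_prod in Hy2.
  replace (k * 1)%nat with k in Hy2 by lia. exact Hy2.
Qed.

Lemma preim_nonempty {X} (d : X -> X -> R) f (Hf : continuous d f) (Ht : transitive d f) :
  forall m V, is_open d V -> (exists y, V y) -> exists z, V (Nat.iter m f z).
Proof.
  induction m; intros V HV [y Hy].
  - exists y; auto.
  - assert (H1: exists y, V (f y)).
    { destruct (Ht (fun _ => True) V (true_open d) HV (ex_intro _ y I) (ex_intro _ y Hy))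
        as [t [Ht1 [y' [_ Hy']]]].
      exists (Nat.iter (t - 1) f y'). replace t with (S (t - 1)) in Hy' by lia. exact Hy'. }
    destruct (IHm (fun y => V (f y)) (preim_open d f V Hf HV) H1) as [z Hz].
    exists z. exact Hz.
Qed.

Lemma one_two {X} (d : X -> X -> R) f (Hf : continuous d f) :
  multi_transitive d f -> F_transitive d f Finf.
Proof.
  intros HM. pose proof (multi_trans d f HM) as Ht.
  intros U V HU HV HUn HVn i Hi nn.
  assert (Hz : forall j, exists z, V (Nat.iter (nn j) f z)).
  { intros j. apply (preim_nonempty d f Hf Ht); auto. }
  destruct (choice_fun _ Hz) as [w Hw].
  destruct HUn as [u Hu].
  destruct (HM i Hi (fun y => forall j, (j < i)%nat -> U (y j))
     (fun y => forall j, (j < i)%nat -> V (Nat.iter (nn j) f (y j)))) as [K [HK [y [Hy1 Hy2]]]].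
  apply (box_open d i (fun _ => U)); auto.
  apply (box_open d i (fun j z => V (Nat.iter (nn j) f z))); auto.
  intros j _. apply preim_open; auto. apply cont_iter; auto.
  exists (fun _ => u); auto. exists w; auto.
  exists K. split; auto. intros j Hj. specialize (Hy2 j Hj).
  rewrite iter_prod, <- iter_add in Hy2. split. nia.
  exists (y j). split; auto. rewrite Nat.add_comm. exact Hy2.
Qed.

Lemma three_two {X} (d : X -> X -> R) f (Hf : continuous d f) :
  F_point_transitive d f (nabla Finf) -> F_transitive d f Finf.
Proof.
  intros [x Hx].
  assert (unb : forall U, is_open d U -> (exists y, U y) -> forall N,
            exists a, (N < a)%nat /\ U (Nat.iter a f x)).
  { intros U HU HUn N. destruct (Hx U HU HUn 1%nat (le_n 1) (fun _ => N)) as [k [Hk H2]].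
    destruct (H2 0%nat ltac:(lia)) as [a [b [[Ha1 Ha2] [[Hb1 Hb2] [Hab E]]]]].
    exists a. split; [lia|auto]. }
  assert (Ht : transitive d f).
  { intros U V HU HV HUn HVn. destruct (unb U HU HUn 0%nat) as [b [Hb HUb]].
    destruct (unb V HV HVn b) as [a [Ha HVa]]. exists (a - b)%nat. split. lia.
    exists (Nat.iter b f x). split; auto. rewrite <- iter_add.
    replace (a - b + b)%nat with a by lia. auto. }
  intros U V HU HV HUn HVn i Hi nn.
  destruct (Ht U V HU HV HUn HVn) as [s [Hs [y [Hy1 Hy2]]]].
  assert (HW : is_open d (fun z => U z /\ V (Nat.iter s f z))).
  { apply inter_open; auto. apply preim_open; auto. apply cont_iter; auto. }
  destruct (Hx _ HW (ex_intro _ y (conj Hy1 Hy2)) i Hi (fun j => nn j + s * j)%nat) as [k [Hk H2]].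
  exists (k + s)%nat. split. lia. intros j Hj.
  destruct (H2 j Hj) as [a [b [[Ha1 [HaU HaV]] [[Hb1 [HbU HbV]] [Hab E]]]]].
  split. nia. exists (Nat.iter b f x). split; auto.
  replace ((k + s) * S j + nn j)%nat with (s + (a - b))%nat by nia.
  rewrite iter_add, <- (iter_add f (a - b) b). replace (a - b + b)%nat with a by lia. exact HaV.
Qed.

Lemma hitlist {X} (d : X -> X -> R) f (Hd : is_metric d) (Hf : continuous d f)
  (Ht : transitive d f) (L : list X) rho O :
  0 < rho -> is_open d O -> (exists y, O y) ->
  exists O', is_open d O' /\ (exists y, O' y) /\ forall y, O' y -> O y /\
    forall c, In c L -> exists t, (1 <= t)%nat /\ d c (Nat.iter t f y) < rho.
Proof.
  intros Hr HO HOn. induction L as [|c L IH].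
  - exists O. split; auto. split; auto. intros y Hy; split; auto. intros c [].
  - destruct IH as [O1 [HO1 [HO1n HO1p]]].
    assert (Hcc : d c c < rho) by (rewrite (m_refl d Hd); lra).
    destruct (Ht O1 (fun y => d c y < rho) HO1 (ball_open d Hd c rho) HO1n
      (ex_intro (fun y => d c y < rho) c Hcc)) as [t [Ht1 [y [Hy1 Hy2]]]].
    exists (fun z => O1 z /\ d c (Nat.iter t f z) < rho). split.
    apply inter_open; auto. apply (preim_open d _ (fun y => d c y < rho)). apply cont_iter; auto.
    apply ball_open; auto.
    split. exists y; auto.
    intros z [Hz1 Hz2]. destruct (HO1p z Hz1) as [HzO Hzc]. split; auto.
    intros c' [E|Hc']. subst c'. exists t; auto. apply Hzc; auto.
Qed.

Fixpoint lmax (l : list nat) : nat := match l with nil => 0%nat | cons a l => Nat.max a (lmax l) end.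
Lemma lmax_ge l m : In m l -> (m <= lmax l)%nat.
Proof. induction l; simpl. intros []. intros [E|H]. subst; lia. specialize (IHl H); lia. Qed.

Lemma transitive_point {X} (d : X -> X -> R) f (Hd : is_metric d) (Hc : compact_metric d)
  (Hf : continuous d f) (Ht : transitive d f) (Hne : inhabited X) :
  exists x, forall U, is_open d U -> (exists y, U y) -> exists t, (1 <= t)%nat /\ U (Nat.iter t f x).
Proof.
  assert (TB : forall m : nat, exists L : list X, forall y, exists c, In c L /\ d c y < / INR (S m)).
  { intros m. assert (Hr : 0 < / INR (S m)) by (apply Rinv_0_lt_compat, lt_0_INR; lia).
    destruct (Hc X (fun c y => d c y < / INR (S m))) as [l Hl].
    intros c; apply ball_open; auto.
    intros y. exists y. rewrite (m_refl d Hd). lra.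
    exists l. exact Hl. }
  destruct (choice_fun _ TB) as [Lf HLf].
  set (Good := fun m y => forall c, In c (Lf m) -> exists t, (1 <= t)%nat /\ d c (Nat.iter t f y) < / INR (S m)).
  assert (Step : forall ms : nat * (X * R), exists s' : X * R,
     0 < snd (snd ms) -> 0 < snd s' /\ forall y, d (fst s') y <= snd s' ->
        d (fst (snd ms)) y < snd (snd ms) /\ Good (fst ms) y).
  { intros [m [p r]]. simpl. destruct (Rlt_dec 0 r) as [Hr|Hr].
    2: { exists (p, r). intros; lra. }
    assert (Hrho : 0 < / INR (S m)) by (apply Rinv_0_lt_compat, lt_0_INR; lia).
    assert (Hpp : d p p < r) by (rewrite (m_refl d Hd); lra).
    destruct (hitlist d f Hd Hf Ht (Lf m) _ (fun y => d p y < r) Hrho (ball_open d Hd p r)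
      (ex_intro (fun y => d p y < r) p Hpp)) as [O' [HO' [[q Hq] HO'p]]].
    destruct (HO' q Hq) as [e [He Hqe]].
    exists (q, e / 2). simpl. intros _. split. lra. intros y Hy. apply HO'p, Hqe. lra. }
  destruct (choice_fun _ Step) as [g Hg].
  destruct Hne as [p0].
  pose (sq := fix sq (m : nat) : X * R := match m with 0%nat => (p0, 1) | S m => g (m, sq m) end).
  assert (Hpos : forall m, 0 < snd (sq m)).
  { induction m. simpl; lra. apply (Hg (m, sq m)); auto. }
  assert (Hnest : forall m y, d (fst (sq (S m))) y <= snd (sq (S m)) ->
           d (fst (sq m)) y < snd (sq m) /\ Good m y).
  { intros m y Hy. apply (Hg (m, sq m) (Hpos m)). exact Hy. }
  assert (Hnest2 : forall M m, (m <= M)%nat -> forall y, d (fst (sq M)) y <= snd (sq M) ->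
           d (fst (sq m)) y <= snd (sq m)).
  { induction M; intros m Hm y Hy.
    - replace m with 0%nat by lia. auto.
    - destruct (Nat.eq_dec m (S M)). subst; auto.
      apply IHM. lia. left. apply (Hnest M y Hy). }
  assert (Hx : exists x, forall m, d (fst (sq m)) x <= snd (sq m)).
  { apply NNPP. intros Hn.
    destruct (Hc nat (fun m x => snd (sq m) < d (fst (sq m)) x)) as [l Hl].
    - intros m x Hx. exists (d (fst (sq m)) x - snd (sq m)). split. lra.
      intros z Hz. pose proof (m_tri d Hd (fst (sq m)) z x). rewrite (m_sym d Hd z x) in H. lra.
    - intros x. apply NNPP. intros Hx. apply Hn. exists x. intros m.
      apply Rnot_lt_le. intros H. apply Hx. exists m. exact H.
    - destruct (Hl (fst (sq (lmax l)))) as [m [Hm Hm2]].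
      pose proof (Hnest2 (lmax l) m (lmax_ge l m Hm) (fst (sq (lmax l)))) as H.
      rewrite (m_refl d Hd) in H. specialize (H (Rlt_le _ _ (Hpos _))). lra. }
  destruct Hx as [x Hx]. exists x.
  intros U HU [u Hu]. destruct (HU u Hu) as [e [He HUe]].
  destruct (archimed_cor1 (e / 2) ltac:(lra)) as [N [HN HN0]].
  set (m := (N - 1)%nat). replace N with (S m) in HN by (unfold m; lia).
  destruct (HLf m u) as [c [Hc1 Hc2]].
  destruct (proj2 (Hnest m x (Hx (S m))) c Hc1) as [t [Ht1 Ht2]].
  exists t. split; auto. apply HUe.
  pose proof (m_tri d Hd u c (Nat.iter t f x)). rewrite (m_sym d Hd u c) in H. lra.
Qed.

Lemma two_three {X} (d : X -> X -> R) f (Hd : is_metric d) (Hc : compact_metric d)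
  (Hf : continuous d f) (Hne : inhabited X) :
  F_transitive d f Finf -> F_point_transitive d f (nabla Finf).
Proof.
  intros HF. destruct (transitive_point d f Hd Hc Hf (Finf_trans d f HF) Hne) as [x Hx].
  exists x. intros U HU HUn i Hi nn.
  destruct (HF U U HU HU HUn HUn i Hi nn) as [k [Hk H2]]. exists k. split; auto.
  intros j Hj. destruct (H2 j Hj) as [Hm [y [Hy1 Hy2]]].
  set (m := (k * S j + nn j)%nat) in *.
  destruct (Hx (fun z => U z /\ U (Nat.iter m f z))) as [t [Ht [Ht1 Ht2]]].
  { apply inter_open; auto. apply preim_open; auto. apply cont_iter; auto. }
  { exists y; auto. }
  exists (m + t)%nat, t. split. split. lia. rewrite iter_add; auto.
  split. split; auto. split; lia.
Qed.

Theorem theorem4p9 (X : Type) (d : X -> X -> R) (f : X -> X)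
  (Hd : is_metric d) (Hc : compact_metric d) (Hf : continuous d f) (Hne : inhabited X) :
  (multi_transitive d f <-> F_transitive d f Finf) /\
  (F_transitive d f Finf <-> F_point_transitive d f (nabla Finf)).
Proof.
  split; split.
  - apply one_two; auto.
  - apply two_one; auto.
  - apply two_three; auto.
  - apply three_two; auto.
Qed.
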